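(* Let $\rho,k\ge 1$ and let $\mathcal{F}$ be a finite family of $\rho$-fat objects in the plane with size-ratio at most $k$, and let $G$ be its intersection graph. Then $\chi_{CF}^{pn}(G)=O(k^2\rho^2)$ and $\chi_{CF}^{cn}(G)=O(\rho^2\log k)$ (for $k\ge2$ in the latter), where the implied constants are absolute.
   Context: A simple Jordan region $C$ in the plane is $\rho$-fat if there exist $x\in C$ and discs $A,B$ centered at $x$ with radii $r_A,r_B$ such that $A\subseteq C\subseteq B$ and $r_B/r_A\le\rho$. The size of a $\rho$-fat object $C$ is the maximum of $r_A$ over all such pairs $A,B$. The size-ratio of $\mathcal{F}$ is $\max_{C_1,C_2\in\mathcal{F}}\mathrm{size}(C_1)/\mathrm{size}(C_2)$. The intersection graph of $\mathcal{F}$ has vertex set $\mathcal{F}$, with distinct $C_1,C_2$ adjacent iff $C_1\cap C_2\neq\emptyset$. A coloring of $V(G)$ is a pointed (resp. closed) CF-coloring if for every $v$ with $N_G(v)\neq\emptyset$ (resp. for every $v$), the set $N_G(v)=\{u:\{u,v\}\in E(G)\}$ (resp. $N_G[v]=N_G(v)\cup\{v\}$) contains a vertex whose color differs from the colors of all other vertices of that set; $\chi_{CF}^{pn}(G)$ and $\chi_{CF}^{cn}(G)$ denote the minimum numbers of colors in such colorings. *)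

(* Defs.v *)
From Stdlib Require Import Reals Lra.
Open Scope R_scope.

Definition pt := (R * R)%type.
Definition dist2 (p q : pt) : R :=
  sqrt ((fst p - fst q)^2 + (snd p - snd q)^2).

Definition disc (x : pt) (r : R) : pt -> Prop := fun p => dist2 x p <= r.

Definition subset (A B : pt -> Prop) : Prop := forall p, A p -> B p.

Definition cont_path (f : R -> pt) : Prop :=
  forall t eps, 0 < eps -> exists delta, 0 < delta /\
    forall s, Rabs (s - t) < delta -> dist2 (f s) (f t) < eps.

Definition jordan_curve (g : R -> pt) : Prop :=
  cont_path g /\ (forall t, g (t + 1) = g t) /\
  (forall s t, 0 <= s < 1 -> 0 <= t < 1 -> g s = g t -> s = t).

Definition on_curve (g : R -> pt) (p : pt) : Prop :=
  exists t, 0 <= t <= 1 /\ g t = p.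

(* q can be reached from p by a path in the complement of the curve
   (the components of this open set are its path components). *)
Definition joined_off (g : R -> pt) (p q : pt) : Prop :=
  exists f : R -> pt, cont_path f /\ f 0 = p /\ f 1 = q /\
    forall t, 0 <= t <= 1 -> ~ on_curve g (f t).

(* p lies in the bounded component of the complement of the curve. *)
Definition in_interior (g : R -> pt) (p : pt) : Prop :=
  ~ on_curve g p /\ exists M, forall q, joined_off g p q -> dist2 p q <= M.

Definition jordan_region (C : pt -> Prop) : Prop :=
  exists g, jordan_curve g /\
    forall p, C p <-> (on_curve g p \/ in_interior g p).

Definition fat_radius (rho : R) (C : pt -> Prop) (rA : R) : Prop :=
  exists x rB, C x /\ 0 < rA /\ subset (disc x rA) C /\
    subset C (disc x rB) /\ rB / rA <= rho.

Definition fat (rho : R) (C : pt -> Prop) : Prop :=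
  jordan_region C /\ exists rA, fat_radius rho C rA.

(* size(C) = max of the admissible rA; stated as the least upper bound
   (which is attained, hence equals the maximum). *)
Definition is_size (rho : R) (C : pt -> Prop) (s : R) : Prop :=
  is_lub (fat_radius rho C) s.

(* Family F indexed by 0..n-1, members pairwise distinct.
   Intersection graph: u,v adjacent iff u <> v and F u, F v meet. *)
Definition adj (F : nat -> pt -> Prop) (u v : nat) : Prop :=
  u <> v /\ exists p, F u p /\ F v p.

Definition pointed_cf (n : nat) (F : nat -> pt -> Prop) (c : nat -> nat) : Prop :=
  forall v, (v < n)%nat -> (exists u, (u < n)%nat /\ adj F v u) ->
    exists u, (u < n)%nat /\ adj F v u /\
      forall w, (w < n)%nat -> adj F v w -> w <> u -> c w <> c u.

Definition closed_cf (n : nat) (F : nat -> pt -> Prop) (c : nat -> nat) : Prop :=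
  forall v, (v < n)%nat ->
    exists u, (u < n)%nat /\ (u = v \/ adj F v u) /\
      forall w, (w < n)%nat -> (w = v \/ adj F v w) -> w <> u -> c w <> c u.

Definition colours_below (n : nat) (c : nat -> nat) (m : nat) : Prop :=
  forall i, (i < n)%nat -> (c i < m)%nat.

Definition chi_pn_le (n : nat) (F : nat -> pt -> Prop) (X : R) : Prop :=
  exists m c, INR m <= X /\ colours_below n c m /\ pointed_cf n F c.
Definition chi_cn_le (n : nat) (F : nat -> pt -> Prop) (X : R) : Prop :=
  exists m c, INR m <= X /\ colours_below n c m /\ closed_cf n F c.

(* Main.v *)
Require Import Defs.
From Stdlib Require Import Reals.
From Stdlib Require Import Lra Lia List ClassicalEpsilon Classical ZArith Psatz.
Import Defs.
Open Scope R_scope.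

Lemma fchoice {A : Type} (P : nat -> A -> Prop) :
  (forall i, exists a, P i a) -> exists f : nat -> A, forall i, P i (f i).
Proof.
  intros H. exists (fun i => proj1_sig (constructive_indefinite_description _ (H i))).
  intro i. exact (proj2_sig (constructive_indefinite_description _ (H i))).
Qed.

Lemma sq_le_sqrt a b : 0 <= a -> 0 <= b -> a ^ 2 <= b -> a <= sqrt b.
Proof.
  intros Ha Hb H. rewrite <- (sqrt_pow2 a Ha). apply sqrt_le_1; nra.
Qed.

Lemma sqrt_le_sq a b : 0 <= a -> sqrt a <= b -> a <= b ^ 2.
Proof.
  intros Ha H. pose proof (sqrt_sqrt a Ha). pose proof (sqrt_pos a). nra.
Qed.

Lemma dist_nonneg p q : 0 <= dist2 p q.
Proof. unfold dist2. apply sqrt_pos. Qed.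

Lemma absx_le_dist p q : Rabs (fst p - fst q) <= dist2 p q.
Proof.
  unfold dist2. apply sq_le_sqrt. apply Rabs_pos.
  apply Rplus_le_le_0_compat; apply pow2_ge_0.
  pose proof (pow2_ge_0 (snd p - snd q)).
  rewrite pow2_abs. lra.
Qed.

Lemma absy_le_dist p q : Rabs (snd p - snd q) <= dist2 p q.
Proof.
  unfold dist2. apply sq_le_sqrt. apply Rabs_pos.
  apply Rplus_le_le_0_compat; apply pow2_ge_0.
  rewrite pow2_abs. pose proof (pow2_ge_0 (fst p - fst q)). lra.
Qed.

Lemma dist_le_sum p q : dist2 p q <= Rabs (fst p - fst q) + Rabs (snd p - snd q).
Proof.
  unfold dist2. set (a := fst p - fst q). set (b := snd p - snd q).
  rewrite <- (sqrt_pow2 (Rabs a + Rabs b)).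
  2:{ pose proof (Rabs_pos a); pose proof (Rabs_pos b); lra. }
  apply sqrt_le_1. apply Rplus_le_le_0_compat; apply pow2_ge_0. apply pow2_ge_0.
  pose proof (Rabs_pos a); pose proof (Rabs_pos b).
  rewrite <- (pow2_abs a), <- (pow2_abs b). nra.
Qed.

Lemma dist_self p : dist2 p p = 0.
Proof. unfold dist2. replace ((fst p - fst p)^2 + (snd p - snd p)^2) with 0 by ring. apply sqrt_0. Qed.

Lemma dist2_sym p q : dist2 p q = dist2 q p.
Proof. unfold dist2. f_equal. ring. Qed.


Lemma radius_le x rB C x' r' : subset C (disc x rB) -> 0 < r' -> subset (disc x' r') C -> r' <= rB.
Proof.
  intros HC Hr Hd.
  set (q1 := (fst x' + r', snd x')). set (q2 := (fst x' - r', snd x')).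
  assert (E1 : dist2 x' q1 = r').
  { unfold dist2, q1; cbn [fst snd]. replace ((fst x' - (fst x' + r'))^2 + (snd x' - snd x')^2) with (r'^2) by ring.
    apply sqrt_pow2; lra. }
  assert (E2 : dist2 x' q2 = r').
  { unfold dist2, q2; cbn [fst snd]. replace ((fst x' - (fst x' - r'))^2 + (snd x' - snd x')^2) with (r'^2) by ring.
    apply sqrt_pow2; lra. }
  assert (H1 : dist2 x q1 <= rB) by (apply HC, Hd; unfold disc; lra).
  assert (H2 : dist2 x q2 <= rB) by (apply HC, Hd; unfold disc; lra).
  pose proof (dist_nonneg x q1) as N1. assert (HrB : 0 <= rB) by lra. clear N1 E1 E2.
  unfold dist2, q1, q2 in *; cbn [fst snd] in *.
  apply sqrt_le_sq in H1; [| apply Rplus_le_le_0_compat; apply pow2_ge_0].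
  apply sqrt_le_sq in H2; [| apply Rplus_le_le_0_compat; apply pow2_ge_0].
  set (a := fst x - fst x') in *. set (b := snd x - snd x') in *.
  assert (r' ^ 2 <= rB ^ 2).
  { replace (fst x - (fst x' + r')) with (a - r') in H1 by (unfold a; ring).
    replace (fst x - (fst x' - r')) with (a + r') in H2 by (unfold a; ring).
    pose proof (pow2_ge_0 a). pose proof (pow2_ge_0 b). nra. }
  nra.
Qed.

Lemma fat_has_size rho C : fat rho C -> exists s, is_size rho C s /\ 0 < s.
Proof.
  intros [_ [rA HA]].
  destruct HA as [x [rB [Cx [HrA [Hd [HC Hrat]]]]]].
  assert (Hb : bound (fat_radius rho C)).
  { exists rB. intros r' [x' [rB' [_ [Hr' [Hd' _]]]]]. eapply radius_le; eauto. }
  destruct (completeness _ Hb) as [s Hs].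
  { exists rA. exists x, rB. tauto. }
  exists s. split. exact Hs.
  destruct Hs as [Hu _]. assert (rA <= s). { apply Hu. exists x, rB. tauto. } lra.
Qed.

Lemma size_witness rho C s : 1 <= rho -> is_size rho C s -> 0 < s ->
  exists x r, s / 2 < r /\ r <= s /\ subset (disc x r) C /\ subset C (disc x (rho * r)).
Proof.
  intros Hrho [Hu Hl] Hs.
  destruct (classic (exists r, fat_radius rho C r /\ s / 2 < r)) as [[r [Hr Hlt]] | Hn].
  - destruct Hr as [x [rB [Cx [Hr0 [Hd [HC Hrat]]]]]].
    exists x, r. split; [lra|]. split.
    { apply Hu. exists x, rB. tauto. }
    split; [exact Hd|].
    intros p Hp. apply HC in Hp. unfold disc in *.
    assert (rB <= rho * r).
    { replace rB with (rB / r * r) by (field; lra). apply Rmult_le_compat_r; lra. }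
    lra.
  - exfalso. assert (s <= s / 2). { apply Hl. intros r Hr. destruct (Rle_dec r (s/2)); auto.
      exfalso. apply Hn. exists r. split; auto. lra. }
    lra.
Qed.

Lemma nodup_map_inj {A B : Type} (f : A -> B) l : NoDup l ->
  (forall x y, In x l -> In y l -> f x = f y -> x = y) -> NoDup (map f l).
Proof.
  induction l as [|a l IH]; intros Hn Hi; simpl; constructor.
  - intro Hin. apply in_map_iff in Hin. destruct Hin as [y [Hy Hyl]].
    inversion Hn; subst. assert (y = a) by (apply Hi; simpl; auto).
    subst. contradiction.
  - inversion Hn; subst. apply IH; auto. intros; apply Hi; simpl; auto.
Qed.

Lemma count_le {A B : Type} (key : A -> B) l Bx : NoDup l ->
  (forall x y, In x l -> In y l -> key x = key y -> x = y) ->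
  (forall x, In x l -> In (key x) Bx) -> (length l <= length Bx)%nat.
Proof.
  intros Hn Hi Hb. rewrite <- (length_map key l).
  apply NoDup_incl_length. apply nodup_map_inj; auto.
  intros y Hy. apply in_map_iff in Hy. destruct Hy as [x [<- Hx]]. auto.
Qed.

Definition rangeZ (c : Z) (B : nat) : list Z :=
  map (fun i => (c - Z.of_nat B + Z.of_nat i)%Z) (seq 0 (2 * B + 1)).

Lemma rangeZ_in c B z : (Z.abs (z - c) <= Z.of_nat B)%Z -> In z (rangeZ c B).
Proof.
  intro H. unfold rangeZ. apply in_map_iff.
  exists (Z.to_nat (z - c + Z.of_nat B)). split.
  - rewrite Z2Nat.id; lia.
  - apply in_seq. lia.
Qed.

Lemma rangeZ_len c B : length (rangeZ c B) = (2 * B + 1)%nat.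
Proof. unfold rangeZ. rewrite length_map, length_seq. reflexivity. Qed.

Definition box (c1 c2 : Z) (B : nat) : list (Z * Z * bool) :=
  list_prod (list_prod (rangeZ c1 B) (rangeZ c2 B)) (true :: false :: nil).

Lemma box_len c1 c2 B : length (box c1 c2 B) = ((2 * B + 1) * (2 * B + 1) * 2)%nat.
Proof. unfold box. rewrite !length_prod, !rangeZ_len. reflexivity. Qed.

Lemma box_in c1 c2 B z1 z2 b : (Z.abs (z1 - c1) <= Z.of_nat B)%Z ->
  (Z.abs (z2 - c2) <= Z.of_nat B)%Z -> In (z1, z2, b) (box c1 c2 B).
Proof.
  intros H1 H2. unfold box. apply in_prod_iff. split.
  apply in_prod_iff. split; apply rangeZ_in; auto.
  destruct b; simpl; auto.
Qed.

Lemma Rabs_le_inv' a b : Rabs a <= b -> - b <= a <= b.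
Proof. intro H. pose proof (Rle_abs a). pose proof (Rle_abs (-a)). rewrite Rabs_Ropp in *. lra. Qed.

Definition cell (h t : R) : Z := (up (t / h) - 1)%Z.

Lemma cell_spec h t : IZR (cell h t) <= t / h < IZR (cell h t) + 1.
Proof.
  unfold cell. rewrite minus_IZR. destruct (archimed (t / h)). lra.
Qed.

Lemma cell_eq h t t' : 0 < h -> cell h t = cell h t' -> Rabs (t - t') < h.
Proof.
  intros Hh E. pose proof (cell_spec h t). pose proof (cell_spec h t').
  rewrite E in *.
  assert (Rabs (t / h - t' / h) < 1) by (apply Rabs_def1; lra).
  replace (t / h - t' / h) with ((t - t') / h) in H1 by (field; lra).
  unfold Rdiv in H1; rewrite Rabs_mult, Rabs_inv, (Rabs_right h) in H1 by lra.
  apply Rmult_lt_compat_r with (r := h) in H1; [|lra].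
  field_simplify in H1; lra.
Qed.

Definition Bof (x : R) : nat := (Z.to_nat (up x) + 1)%nat.

Lemma Bof_spec x : 0 <= x -> x + 1 <= INR (Bof x) <= x + 2.
Proof.
  intro Hx. unfold Bof. destruct (archimed x) as [H1 H2].
  assert (0 <= up x)%Z. { apply le_IZR. lra. }
  rewrite plus_INR, INR_IZR_INZ, Z2Nat.id by auto. simpl. lra.
Qed.

Lemma cell_near h t c D : 0 < h -> 0 <= D -> Rabs (t - c) <= D ->
  (Z.abs (cell h t - cell h c) <= Z.of_nat (Bof (D / h)))%Z.
Proof.
  intros Hh HD H. pose proof (cell_spec h t). pose proof (cell_spec h c).
  assert (0 <= D / h) by (unfold Rdiv; apply Rmult_le_pos; [lra | left; apply Rinv_0_lt_compat; lra]).
  pose proof (Bof_spec (D / h) H2) as [HB _].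
  assert (Rabs (t / h - c / h) <= D / h).
  { replace (t / h - c / h) with ((t - c) / h) by (field; lra).
    unfold Rdiv; rewrite Rabs_mult, Rabs_inv, (Rabs_right h) by lra.
    apply Rmult_le_compat_r; [|lra]. left. apply Rinv_0_lt_compat; lra. }
  apply Rabs_le_inv' in H3.
  rewrite INR_IZR_INZ in HB.
  assert (A1 : IZR (cell h t - cell h c) < IZR (Z.of_nat (Bof (D / h)))).
  { rewrite minus_IZR. lra. }
  assert (A2 : - IZR (Z.of_nat (Bof (D / h))) < IZR (cell h t - cell h c)).
  { rewrite minus_IZR. lra. }
  apply lt_IZR in A1. rewrite <- opp_IZR in A2. apply lt_IZR in A2. lia.
Qed.

Definition Nbox (x : R) : nat := ((2 * Bof x + 1) * (2 * Bof x + 1) * 2)%nat.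

Lemma Nbox_bound x : 0 <= x -> INR (Nbox x) <= 2 * (2 * x + 5) ^ 2.
Proof.
  intro Hx. pose proof (Bof_spec x Hx). unfold Nbox.
  rewrite !mult_INR, !plus_INR, !mult_INR. simpl. nra.
Qed.

Lemma packing (l : list nat) (kp : nat -> pt) (flag : nat -> bool) (h D : R) (c : pt) :
  0 < h -> 0 <= D -> NoDup l ->
  (forall u, In u l -> Rabs (fst (kp u) - fst c) <= D /\ Rabs (snd (kp u) - snd c) <= D) ->
  (forall u w, In u l -> In w l -> flag u = flag w ->
      Rabs (fst (kp u) - fst (kp w)) < h -> Rabs (snd (kp u) - snd (kp w)) < h -> u = w) ->
  (length l <= Nbox (D / h))%nat.
Proof.
  intros Hh HD Hn Hnear Hinj.
  unfold Nbox. rewrite <- (box_len (cell h (fst c)) (cell h (snd c))).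
  apply (count_le (fun u => (cell h (fst (kp u)), cell h (snd (kp u)), flag u))); auto.
  - intros x y Hx Hy E. injection E as E1 E2 E3.
    apply Hinj; auto; apply cell_eq; auto.
  - intros x Hx. destruct (Hnear x Hx). apply box_in; apply cell_near; auto.
Qed.

Lemma wit_list (P : nat -> Prop) (c : nat -> nat) N :
  (forall col, (col < N)%nat -> exists u, P u /\ c u = col) ->
  exists l, NoDup l /\ length l = N /\ forall u, In u l -> P u /\ (c u < N)%nat.
Proof.
  induction N as [|N IH]; intro H.
  - exists nil. split; [constructor|]. split; [reflexivity|]. intros u0 [].
  - destruct IH as [l [Hn [Hl Hu]]]. { intros col Hc. apply H. lia. }
    destruct (H N ltac:(lia)) as [u [Pu Cu]].
    exists (u :: l). split; [|split].
    + constructor; auto. intro Hin. apply Hu in Hin. lia.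
    + simpl. lia.
    + intros w [<-|Hw]. split; auto; lia. destruct (Hu w Hw). split; auto; lia.
Qed.

Lemma greedy (conf : nat -> nat -> Prop) (D n : nat) :
  (forall u w, conf u w -> conf w u) -> (forall u, ~ conf u u) ->
  (forall u, (u < n)%nat -> forall l, NoDup l -> (forall w, In w l -> (w < n)%nat /\ conf u w) ->
     (length l <= D)%nat) ->
  exists c : nat -> nat, (forall u, (c u <= D)%nat) /\
    forall u w, (u < n)%nat -> (w < n)%nat -> conf u w -> c u <> c w.
Proof.
  intros Hsym Hirr. induction n as [|n IH]; intro Hdeg.
  - exists (fun _ => 0%nat). split; intros; lia.
  - destruct IH as [c [Hc Hp]].
    { intros u Hu l Hn Hl. apply (Hdeg u); auto. intros w Hw. destruct (Hl w Hw); split; auto; lia. }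
    assert (Hcol : exists col, (col <= D)%nat /\ forall u, (u < n)%nat -> conf n u -> c u <> col).
    { apply NNPP. intro Hno.
      destruct (wit_list (fun u => (u < n)%nat /\ conf n u) c (S D)) as [l [Hn [Hl Hu]]].
      { intros col Hcol. apply NNPP. intro Hx. apply Hno. exists col. split; [lia|].
        intros u Hu Hc' E. apply Hx. exists u. auto. }
      assert (length l <= D)%nat.
      { apply (Hdeg n); auto. intros w Hw. destruct (Hu w Hw) as [[? ?] _]. split; auto. }
      lia. }
    destruct Hcol as [col [Hcol Hcu]].
    exists (fun u => if Nat.eqb u n then col else c u). split.
    + intro u. destruct (Nat.eqb u n); auto.
    + intros u w Hu Hw Hcf.
      destruct (Nat.eqb_spec u n); destruct (Nat.eqb_spec w n); subst.
      * exfalso. exact (Hirr n Hcf).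
      * intro E. apply (Hcu w); auto. lia.
      * intro E. apply (Hcu u); auto. lia.
      * apply Hp; auto; lia.
Qed.

Lemma min_exists (P : nat -> Prop) (f : nat -> nat) :
  (exists u, P u) -> exists u, P u /\ forall w, P w -> (f u <= f w)%nat.
Proof.
  intros [u Pu].
  assert (forall N u, (f u <= N)%nat -> P u -> exists u, P u /\ forall w, P w -> (f u <= f w)%nat).
  { induction N as [|N IH]; intros v Hv Pv.
    - exists v. split; auto. intros; lia.
    - destruct (classic (exists w, P w /\ (f w < f v)%nat)) as [[w [Pw Hw]]|Hn].
      + apply (IH w); auto. lia.
      + exists v. split; auto. intros w Pw. apply NNPP. intro. apply Hn. exists w. split; auto. lia. }
  eapply H; eauto.
Qed.

Definition decP (P : Prop) : bool := if excluded_middle_informative P then true else false.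

Lemma decP_true P : decP P = true <-> P.
Proof. unfold decP. destruct (excluded_middle_informative P); split; intros; auto; discriminate || contradiction. Qed.

Lemma filter_shorter {A} (f : A -> bool) l a : In a l -> f a = false ->
  (length (filter f l) < length l)%nat.
Proof.
  induction l as [|b l IH]; simpl; intros Hin Hf; [contradiction|].
  destruct Hin as [->|Hin].
  - rewrite Hf. pose proof (filter_length_le f l). lia.
  - destruct (f b); simpl; specialize (IH Hin Hf); try lia.
Qed.

Lemma max_in_list (r : nat -> R) (l : list nat) : l <> nil ->
  exists v, In v l /\ forall w, In w l -> r w <= r v.
Proof.
  induction l as [|a l IH]; intro H; [congruence|].
  destruct l as [|b l'].
  - exists a. split; simpl; auto. intros w [<-|[]]. lra.
  - destruct IH as [v [Hv Hm]]. congruence.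
    destruct (Rle_dec (r a) (r v)).
    + exists v. split; [simpl; auto|]. intros w [<-|Hw]; auto.
    + exists a. split; [simpl; auto|]. intros w [<-|Hw]; [lra|]. specialize (Hm w Hw). lra.
Qed.

Lemma mis (adj : nat -> nat -> Prop) (r : nat -> R) :
  (forall u w, adj u w -> adj w u) -> (forall u, ~ adj u u) ->
  forall L : list nat, exists I : nat -> Prop,
    (forall u, I u -> In u L) /\ (forall u w, I u -> I w -> ~ adj u w) /\
    (forall v, In v L -> ~ I v -> exists u, I u /\ adj v u /\ r v <= r u).
Proof.
  intros Hsym Hirr.
  assert (forall N L, (length L <= N)%nat -> exists I : nat -> Prop,
    (forall u, I u -> In u L) /\ (forall u w, I u -> I w -> ~ adj u w) /\
    (forall v, In v L -> ~ I v -> exists u, I u /\ adj v u /\ r v <= r u)).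
  { induction N as [|N IH]; intros L HL.
    - destruct L; [|simpl in HL; lia].
      exists (fun _ => False). simpl. repeat split; intros; tauto.
    - destruct L as [|a L0].
      + exists (fun _ => False). simpl. repeat split; intros; tauto.
      + destruct (max_in_list r (a :: L0)) as [v0 [Hv0 Hmax]]. congruence.
        set (f := fun w => negb (decP (w = v0 \/ adj v0 w))).
        destruct (IH (filter f (a :: L0))) as [I' [H1 [H2 H3]]].
        { pose proof (filter_shorter f (a :: L0) v0 Hv0).
          assert (f v0 = false). { unfold f. rewrite (proj2 (decP_true _)); auto. }
          specialize (H H0). change (length (a :: L0)) with (S (length L0)) in H. simpl in HL. lia. }
        exists (fun u => u = v0 \/ I' u). split; [|split].
        * intros u [->|Hu]; auto. apply H1 in Hu. apply filter_In in Hu. tauto.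
        * intros u w [->|Hu] [->|Hw].
          -- apply Hirr.
          -- apply H1 in Hw. apply filter_In in Hw. destruct Hw as [_ Hw].
             unfold f in Hw. intro Ha. rewrite (proj2 (decP_true _)) in Hw; [discriminate|auto].
          -- apply H1 in Hu. apply filter_In in Hu. destruct Hu as [_ Hu].
             unfold f in Hu. intro Ha. rewrite (proj2 (decP_true _)) in Hu; [discriminate|].
             right; apply Hsym; auto.
          -- apply H2; auto.
        * intros v Hv HnI.
          destruct (classic (v = v0 \/ adj v0 v)) as [[->|Ha]|Hna].
          -- exfalso; apply HnI; auto.
          -- exists v0. split; [left; reflexivity|]. split; [apply Hsym; exact Ha| apply Hmax; exact Hv].
          -- destruct (H3 v) as [u [Hu [Ha Hr]]].
             ++ apply filter_In. split; auto. unfold f; cbv beta.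
                destruct (decP (v = v0 \/ adj v0 v)) eqn:E; auto.
                apply (proj1 (decP_true _)) in E. exfalso. tauto.
             ++ intro; apply HnI; auto.
             ++ exists u. auto. }
  intro L. eapply H. eauto.
Qed.

Lemma setup rho k n F : 1 <= rho -> 1 <= k -> (0 < n)%nat ->
  (forall i, (i < n)%nat -> fat rho (F i)) ->
  (forall i j s1 s2, (i < n)%nat -> (j < n)%nat ->
         is_size rho (F i) s1 -> is_size rho (F j) s2 -> s1 <= k * s2) ->
  exists (x : nat -> pt) (r : nat -> R) (m : R), 0 < m /\
    forall i, (i < n)%nat -> m / 2 < r i /\ r i <= k * m /\
      subset (disc (x i) (r i)) (F i) /\ subset (F i) (disc (x i) (rho * r i)).
Proof.
  intros Hrho Hk Hn Hfat Hsz.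
  destruct (fchoice (fun i s => (i < n)%nat -> is_size rho (F i) s /\ 0 < s)) as [s Hs].
  { intro i. destruct (classic (i < n)%nat) as [Hi|Hi].
    - destruct (fat_has_size rho (F i) (Hfat i Hi)) as [s [H1 H2]]. exists s. auto.
    - exists 0. intro; contradiction. }
  destruct (max_in_list (fun i => - s i) (seq 0 n)) as [i0 [Hi0 Hmin]].
  { destruct n; [lia|]. simpl. congruence. }
  apply in_seq in Hi0. destruct (Hs i0 ltac:(lia)) as [Hsi0 Hpos0].
  destruct (fchoice (fun i (pr : pt * R) => (i < n)%nat ->
     s i / 2 < snd pr /\ snd pr <= s i /\ subset (disc (fst pr) (snd pr)) (F i) /\
     subset (F i) (disc (fst pr) (rho * snd pr)))) as [w Hw].
  { intro i. destruct (classic (i < n)%nat) as [Hi|Hi].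
    - destruct (Hs i Hi) as [H1 H2].
      destruct (size_witness rho (F i) (s i) Hrho H1 H2) as [x [r Hxr]].
      exists (x, r). intros _. simpl. exact Hxr.
    - exists ((0,0), 0). intro; contradiction. }
  exists (fun i => fst (w i)), (fun i => snd (w i)), (s i0). split; auto.
  intros i Hi. destruct (Hw i Hi) as [A1 [A2 [A3 A4]]].
  assert (s i0 <= s i). { assert (In i (seq 0 n)) by (apply in_seq; lia). specialize (Hmin i H). lra. }
  assert (s i <= k * s i0). { destruct (Hs i Hi). apply Hsz with i i0; auto. lia. }
  repeat split; auto; lra.
Qed.

Lemma adj_sym F u v : adj F u v -> adj F v u.
Proof. intros [H [p [A B]]]. split; auto. exists p; auto. Qed.

Lemma adj_irr F u : ~ adj F u u.
Proof. intros [H _]. auto. Qed.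

Lemma adj_close rho F (x : nat -> pt) (r : nat -> R) i j :
  subset (F i) (disc (x i) (rho * r i)) -> subset (F j) (disc (x j) (rho * r j)) ->
  adj F i j ->
  Rabs (fst (x i) - fst (x j)) <= rho * r i + rho * r j /\
  Rabs (snd (x i) - snd (x j)) <= rho * r i + rho * r j.
Proof.
  intros Hi Hj [_ [p [Pi Pj]]]. apply Hi in Pi. apply Hj in Pj. unfold disc in *.
  pose proof (absx_le_dist (x i) p). pose proof (absx_le_dist p (x j)).
  pose proof (absy_le_dist (x i) p). pose proof (absy_le_dist p (x j)).
  rewrite dist2_sym in Pj.
  split.
  - replace (fst (x i) - fst (x j)) with ((fst (x i) - fst p) + (fst p - fst (x j))) by ring.
    pose proof (Rabs_triang (fst (x i) - fst p) (fst p - fst (x j))). lra.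
  - replace (snd (x i) - snd (x j)) with ((snd (x i) - snd p) + (snd p - snd (x j))) by ring.
    pose proof (Rabs_triang (snd (x i) - snd p) (snd p - snd (x j))). lra.
Qed.

Lemma indep_close F (x : nat -> pt) (r : nat -> R) u w h :
  subset (disc (x u) (r u)) (F u) -> subset (disc (x w) (r w)) (F w) -> 0 <= r w ->
  ~ adj F u w -> 2 * h <= r u ->
  Rabs (fst (x u) - fst (x w)) < h -> Rabs (snd (x u) - snd (x w)) < h -> u = w.
Proof.
  intros Hu Hw Hr Hna Hh H1 H2. apply NNPP. intro Hne. apply Hna. split; auto.
  exists (x w). split.
  - apply Hu. unfold disc. pose proof (dist_le_sum (x u) (x w)). lra.
  - apply Hw. unfold disc. rewrite dist_self. lra.
Qed.

Lemma pointed_part rho k n F (x : nat -> pt) (r : nat -> R) m :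
  1 <= rho -> 1 <= k -> 0 < m ->
  (forall i, (i < n)%nat -> m / 2 < r i /\ r i <= k * m /\
      subset (disc (x i) (r i)) (F i) /\ subset (F i) (disc (x i) (rho * r i))) ->
  chi_pn_le n F (1000000 * k ^ 2 * rho ^ 2).
Proof.
  intros Hrho Hk Hm Hx.
  destruct (mis (adj F) r (adj_sym F) (adj_irr F) (seq 0 n)) as [I [HIn [HIind HIdom]]].
  assert (HIlt : forall u, I u -> (u < n)%nat). { intros u Hu. apply HIn in Hu. apply in_seq in Hu. lia. }
  destruct (fchoice (fun v u => (v < n /\ I v /\ exists u', u' < n /\ adj F v u')%nat ->
                                 (u < n)%nat /\ adj F v u)) as [p Hp].
  { intro v. destruct (classic (v < n /\ I v /\ exists u', u' < n /\ adj F v u')%nat) as [H|H].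
    - destruct H as [_ [_ [u' [H1 H2]]]]. exists u'. auto.
    - exists 0%nat. intro; contradiction. }
  set (Pset := fun w => exists v, (v < n /\ I v /\ (exists u', u' < n /\ adj F v u') /\ p v = w)%nat).
  destruct (fchoice (fun w v => Pset w -> (v < n /\ I v /\ (exists u', u' < n /\ adj F v u') /\ p v = w)%nat)) as [q Hq].
  { intro w. destruct (classic (Pset w)) as [H|H].
    - destruct H as [v Hv]. exists v. auto.
    - exists 0%nat. intro; contradiction. }
  set (SS := fun w => I w \/ Pset w).
  set (conf := fun u w => u <> w /\ SS u /\ SS w /\ exists v, (v < n)%nat /\ adj F v u /\ adj F v w).
  set (D := Nbox (6 * rho * k * m / (m / 4))).
  assert (Hclose : forall i j, (i < n)%nat -> (j < n)%nat -> adj F i j ->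
     Rabs (fst (x i) - fst (x j)) <= 2 * rho * k * m /\ Rabs (snd (x i) - snd (x j)) <= 2 * rho * k * m).
  { intros i j Hi Hj Ha. destruct (Hx i Hi) as [A1 [A2 [_ A4]]]. destruct (Hx j Hj) as [B1 [B2 [_ B4]]].
    destruct (adj_close rho F x r i j A4 B4 Ha). split; nra. }
  assert (Hpset : forall w, Pset w -> ~ I w /\ (w < n)%nat /\ (q w < n)%nat /\ I (q w) /\ adj F (q w) w /\ p (q w) = w).
  { intros w Hw. destruct (Hq w Hw) as [Hv [HIv [Hne Hpv]]].
    destruct (Hp (q w) (conj Hv (conj HIv Hne))) as [Hlt Ha]. rewrite Hpv in *.
    split; [intro HI; exact (HIind _ _ HIv HI Ha)|]. split; [auto|split; [auto|split; [auto|split; [exact Ha|reflexivity]]]]. }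
  assert (HSlt : forall w, SS w -> (w < n)%nat).
  { intros w [H|H]; [apply HIlt; auto | apply Hpset; auto]. }
  set (kp := fun w => if decP (I w) then x w else x (q w)).
  assert (Hdeg : forall u, (u < n)%nat -> forall l, NoDup l ->
     (forall w, In w l -> (w < n)%nat /\ conf u w) -> (length l <= D)%nat).
  { intros u Hu l Hnd Hl. unfold D.
    apply (packing l kp (fun w => decP (I w)) (m / 4) (6 * rho * k * m) (x u)); auto; try lra.
    { assert (0 <= rho * k) by nra. nra. }
    - intros w Hw. destruct (Hl w Hw) as [Hwn [_ [Su [Sw [v [Hv [Hvu Hvw]]]]]]].
      destruct (Hclose v u Hv Hu Hvu) as [C1 C2]. destruct (Hclose v w Hv Hwn Hvw) as [C3 C4].
      unfold kp. destruct (decP (I w)) eqn:E.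
      + rewrite Rabs_minus_sym in C1, C2.
        pose proof (Rabs_triang (fst (x w) - fst (x v)) (fst (x v) - fst (x u))).
        pose proof (Rabs_triang (snd (x w) - snd (x v)) (snd (x v) - snd (x u))).
        rewrite Rabs_minus_sym in C3, C4.
        replace (fst (x w) - fst (x v) + (fst (x v) - fst (x u))) with (fst (x w) - fst (x u)) in H by ring.
        replace (snd (x w) - snd (x v) + (snd (x v) - snd (x u))) with (snd (x w) - snd (x u)) in H0 by ring.
        assert (0 <= rho * k * m) by (apply Rmult_le_pos; nra).
        rewrite (Rabs_minus_sym (fst (x v))) in H. rewrite (Rabs_minus_sym (snd (x v))) in H0. split; lra.
      + assert (HnI : ~ I w). { intro HI. apply (proj2 (decP_true _)) in HI. congruence. }
        assert (Pw : Pset w). { destruct Sw; tauto. }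
        destruct (Hpset w Pw) as [_ [_ [Hqn [_ [Hqa _]]]]].
        destruct (Hclose (q w) w Hqn Hwn Hqa) as [C5 C6].
        rewrite Rabs_minus_sym in C1, C2, C3, C4.
        pose proof (Rabs_triang (fst (x (q w)) - fst (x w)) (fst (x w) - fst (x v))).
        pose proof (Rabs_triang (fst (x (q w)) - fst (x w) + (fst (x w) - fst (x v))) (fst (x v) - fst (x u))).
        pose proof (Rabs_triang (snd (x (q w)) - snd (x w)) (snd (x w) - snd (x v))).
        pose proof (Rabs_triang (snd (x (q w)) - snd (x w) + (snd (x w) - snd (x v))) (snd (x v) - snd (x u))).
        replace (fst (x (q w)) - fst (x w) + (fst (x w) - fst (x v)) + (fst (x v) - fst (x u))) with (fst (x (q w)) - fst (x u)) in H0 by ring.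
        replace (snd (x (q w)) - snd (x w) + (snd (x w) - snd (x v)) + (snd (x v) - snd (x u))) with (snd (x (q w)) - snd (x u)) in H2 by ring.
        rewrite (Rabs_minus_sym (fst (x v))) in H0. rewrite (Rabs_minus_sym (snd (x v))) in H2. assert (0 <= rho * k * m) by (apply Rmult_le_pos; nra). split; lra.
    - intros w1 w2 Hw1 Hw2 Ef E1 E2.
      destruct (Hl w1 Hw1) as [Hn1 [_ [_ [S1 _]]]]. destruct (Hl w2 Hw2) as [Hn2 [_ [_ [S2 _]]]].
      unfold kp in E1, E2. destruct (decP (I w1)) eqn:D1; rewrite <- Ef in E1, E2.
      + assert (I1 : I w1) by (apply (proj1 (decP_true _)); auto).
        assert (I2 : I w2) by (apply (proj1 (decP_true _)); auto).
        destruct (Hx w1 Hn1) as [A1 [_ [A3 _]]]. destruct (Hx w2 Hn2) as [B1 [_ [B3 _]]].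
        apply (indep_close F x r w1 w2 (m / 4)); auto; try lra; apply HIind; auto.
      + assert (N1 : ~ I w1). { intro HI. apply (proj2 (decP_true _)) in HI. congruence. }
        assert (N2 : ~ I w2). { intro HI. apply (proj2 (decP_true _)) in HI. congruence. }
        assert (P1 : Pset w1) by (destruct S1; tauto). assert (P2 : Pset w2) by (destruct S2; tauto).
        destruct (Hpset w1 P1) as [_ [_ [Q1 [QI1 [_ Qp1]]]]].
        destruct (Hpset w2 P2) as [_ [_ [Q2 [QI2 [_ Qp2]]]]].
        destruct (Hx (q w1) Q1) as [A1 [_ [A3 _]]]. destruct (Hx (q w2) Q2) as [B1 [_ [B3 _]]].
        assert (q w1 = q w2).
        { apply (indep_close F x r (q w1) (q w2) (m / 4)); auto; try lra; apply HIind; auto. }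
        rewrite <- Qp1, <- Qp2, H. reflexivity. }
  destruct (greedy conf D n) as [pal [Hpal Hpp]].
  { intros u w [H1 [H2 [H3 [v [H4 [H5 H6]]]]]]. split; auto. split; auto. split; auto. exists v; auto. }
  { intros u [H _]. auto. }
  { exact Hdeg. }
  exists (D + 2)%nat, (fun w => if decP (SS w) then S (pal w) else 0%nat).
  split; [|split].
  -
    unfold D. replace (6 * rho * k * m / (m / 4)) with (24 * (rho * k)) by (field; lra).
    assert (1 <= rho * k) by nra.
    pose proof (Nbox_bound (24 * (rho * k)) ltac:(lra)).
    rewrite plus_INR. simpl (INR 2). nra.
  - intros i Hi. destruct (decP (SS i)); specialize (Hpal i); lia.
  - intros v Hv [u0 [Hu0 Ha0]].
    assert (HS : exists u, (u < n)%nat /\ adj F v u /\ SS u).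
    { destruct (classic (I v)) as [HI|HnI].
      + destruct (Hp v (conj Hv (conj HI (ex_intro _ u0 (conj Hu0 Ha0))))) as [Hlt Ha].
        exists (p v). split; auto. split; auto. right. exists v. repeat split; auto.
        exists u0; auto.
      + destruct (HIdom v ltac:(apply in_seq; lia) HnI) as [u [HIu [Ha _]]].
        exists u. split; [apply HIlt; auto|]. split; auto. left; auto. }
    destruct HS as [u [Hun [Hvu HSu]]]. exists u. split; auto. split; auto.
    intros w Hwn Hvw Hne.
    destruct (decP (SS u)) eqn:Eu; [| apply (proj2 (decP_true _)) in HSu; congruence].
    destruct (decP (SS w)) eqn:Ew; [|lia].
    apply (proj1 (decP_true _)) in Ew.
    intro E. injection E as E. apply (Hpp w u Hwn Hun); auto.
    split; auto. split; auto. split; auto. exists v. auto.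
Qed.

Lemma ln2_half : 1 / 2 < ln 2.
Proof.
  assert (exp (1/2) * exp (1/2) = exp 1) by (rewrite <- exp_plus; f_equal; lra).
  pose proof exp_le_3. pose proof (exp_pos (1/2)).
  assert (exp (1/2) < 2) by nra.
  rewrite <- (ln_exp (1/2)). apply ln_increasing; lra.
Qed.

Definition Tof (k : R) : nat := Z.to_nat (up (ln k / ln 2)).

Lemma Tof_spec k : 2 <= k -> k <= 2 ^ (Tof k) /\ INR (Tof k) <= ln k / ln 2 + 1.
Proof.
  intro Hk. pose proof ln2_half.
  assert (0 < ln k). { rewrite <- ln_1. apply ln_increasing; lra. }
  assert (0 <= ln k / ln 2) by (unfold Rdiv; apply Rmult_le_pos; [lra| left; apply Rinv_0_lt_compat; lra]).
  destruct (archimed (ln k / ln 2)) as [A1 A2].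
  assert (0 <= up (ln k / ln 2))%Z by (apply le_IZR; lra).
  assert (ET : INR (Tof k) = IZR (up (ln k / ln 2))).
  { unfold Tof. rewrite INR_IZR_INZ, Z2Nat.id; auto. }
  split.
  - destruct (Rle_dec k (2 ^ Tof k)) as [|Hlt]; auto. exfalso.
    assert (ln (2 ^ Tof k) < ln k) by (apply ln_increasing; [apply pow_lt; lra | lra]).
    rewrite ln_pow in H3 by lra. rewrite ET in H3.
    assert (ln k / ln 2 * ln 2 = ln k) by (field; lra).
    nra.
  - rewrite ET. lra.
Qed.

Lemma scale_ex (L : nat -> R) (rr : R) : (forall t, L (S t) = L t / 2) ->
  forall N t, rr <= L t -> L (t + N + 1)%nat < rr ->
  exists t', (t <= t' <= t + N)%nat /\ L (S t') < rr <= L t'.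
Proof.
  intros HL N. induction N as [|N IH]; intros t H1 H2.
  - exists t. split; [lia|]. rewrite Nat.add_0_r, Nat.add_1_r in H2. auto.
  - destruct (Rlt_dec (L (S t)) rr) as [H|H].
    + exists t. split; [lia|]. auto.
    + destruct (IH (S t)) as [t' [Ht' Hr]]; [lra| |].
      * replace (S t + N + 1)%nat with (t + S N + 1)%nat by lia. auto.
      * exists t'. split; [lia|auto].
Qed.

Lemma digits a b c d Q : (b < Q)%nat -> (d < Q)%nat -> (a * Q + b = c * Q + d)%nat -> a = c.
Proof.
  intros Hb Hd E. destruct (Nat.lt_total a c) as [H|[H|H]]; auto.
  - exfalso. assert (a * Q + Q <= c * Q)%nat by nia. lia.
  - exfalso. assert (c * Q + Q <= a * Q)%nat by nia. lia.
Qed.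

Lemma closed_part rho k n F (x : nat -> pt) (r : nat -> R) m :
  1 <= rho -> 2 <= k -> 0 < m ->
  (forall i, (i < n)%nat -> m / 2 < r i /\ r i <= k * m /\
      subset (disc (x i) (r i)) (F i) /\ subset (F i) (disc (x i) (rho * r i))) ->
  chi_cn_le n F (1000000 * rho ^ 2 * ln k).
Proof.
  intros Hrho Hk Hm Hx.
  set (T := Tof k). destruct (Tof_spec k Hk) as [HT1 HT2]. fold T in HT1, HT2.
  set (L := fun t : nat => k * m / 2 ^ t).
  assert (HLS : forall t, L (S t) = L t / 2). { intro t. unfold L. simpl. field. apply pow_nonzero. lra. }
  assert (HLpos : forall t, 0 < L t). { intro t. unfold L. apply Rdiv_lt_0_compat; [nra|apply pow_lt; lra]. }
  assert (HLmono : forall t1 t2, (t1 <= t2)%nat -> L t2 <= L t1).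
  { intros t1 t2 Ht. unfold L. apply Rmult_le_compat_l; [nra|]. apply Rinv_le_contravar. apply pow_lt; lra.
    apply Rle_pow; [lra|auto]. }
  destruct (fchoice (fun i t => (i < n)%nat -> (t <= T)%nat /\ L (S t) < r i <= L t)) as [sc Hsc].
  { intro i. destruct (classic (i < n)%nat) as [Hi|Hi]; [|exists 0%nat; intro; contradiction].
    destruct (Hx i Hi) as [A1 [A2 _]].
    destruct (scale_ex L (r i) HLS T 0) as [t [Ht Hr]].
    - unfold L. simpl. lra.
    - unfold L. simpl (0 + T + 1)%nat. rewrite Nat.add_1_r. simpl.
      assert (0 < 2 ^ T) by (apply pow_lt; lra).
      apply Rle_lt_trans with (m / 2); [|lra].
      unfold Rdiv. rewrite Rinv_mult. 
      replace (k * m * (/ 2 * / 2 ^ T)) with ((m / 2) * (k / 2 ^ T)) by (field; lra).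
      assert (k / 2 ^ T <= 1). { unfold Rdiv. apply (Rmult_le_reg_r (2 ^ T)); auto.
        rewrite Rmult_assoc, Rinv_l by lra. lra. }
      assert (0 <= k / 2 ^ T). { unfold Rdiv. apply Rmult_le_pos; [lra| left; apply Rinv_0_lt_compat; lra]. }
      unfold Rdiv in *. nra.
    - exists t. intros _. split; [lia|auto]. }
  destruct (mis (adj F) r (adj_sym F) (adj_irr F) (seq 0 n)) as [I [HIn [HIind HIdom]]].
  assert (HIlt : forall u, I u -> (u < n)%nat). { intros u Hu. apply HIn in Hu. apply in_seq in Hu. lia. }
  set (conf := fun u w => u <> w /\ I u /\ I w /\ sc u = sc w /\
     Rabs (fst (x u) - fst (x w)) <= 4 * rho * L (sc u) /\ Rabs (snd (x u) - snd (x w)) <= 4 * rho * L (sc u)).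
  set (Dc := Nbox (16 * rho)).
  assert (Hdeg : forall u, (u < n)%nat -> forall l, NoDup l ->
     (forall w, In w l -> (w < n)%nat /\ conf u w) -> (length l <= Dc)%nat).
  { intros u Hu l Hnd Hl.
    assert (E : 4 * rho * L (sc u) / (L (sc u) / 4) = 16 * rho) by (field; specialize (HLpos (sc u)); lra).
    unfold Dc. rewrite <- E. pose proof (HLpos (sc u)).
    apply (packing l x (fun _ => true) (L (sc u) / 4) (4 * rho * L (sc u)) (x u)); auto; try lra.
    - nra.
    - intros w Hw. destruct (Hl w Hw) as [_ [_ [_ [_ [_ [C1 C2]]]]]].
      rewrite Rabs_minus_sym in C1, C2. auto.
    - intros w1 w2 Hw1 Hw2 _ E1 E2.
      destruct (Hl w1 Hw1) as [Hn1 [_ [_ [I1 [S1 _]]]]]. destruct (Hl w2 Hw2) as [Hn2 [_ [_ [I2 [S2 _]]]]].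
      destruct (Hx w1 Hn1) as [A1 [_ [A3 _]]]. destruct (Hx w2 Hn2) as [B1 [_ [B3 _]]].
      destruct (Hsc w1 Hn1) as [_ [Hr1 _]].
      apply (indep_close F x r w1 w2 (L (sc u) / 4)); auto; try lra; try (apply HIind; auto).
      rewrite <- S1, HLS in Hr1. lra. }
  destruct (greedy conf Dc n) as [pal [Hpal Hpp]].
  { intros u w [H1 [H2 [H3 [H4 [H5 H6]]]]]. split; auto. split; auto. split; auto. split; auto.
    rewrite <- H4. rewrite Rabs_minus_sym, (Rabs_minus_sym (snd (x w))). auto. }
  { intros u [H _]. auto. }
  { exact Hdeg. }
  set (Q := S Dc).
  exists (S T * Q + 1)%nat, (fun w => if decP (I w) then (sc w * Q + pal w)%nat else (S T * Q)%nat).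
  assert (Hcol_lt : forall w, (w < n)%nat -> I w -> (sc w * Q + pal w < S T * Q)%nat).
  { intros w Hw HI. destruct (Hsc w Hw) as [Ht _]. specialize (Hpal w). unfold Q in *. nia. }
  split; [|split].
  -
    pose proof ln2_half.
    assert (Hlk : ln 2 <= ln k). { destruct (Req_dec k 2) as [->|]; [lra|]. left. apply ln_increasing; lra. }
    assert (HT3 : INR T <= 2 * ln k + 1).
    { assert (ln k / ln 2 <= 2 * ln k).
      { apply (Rmult_le_reg_r (ln 2)); [lra|]. unfold Rdiv. rewrite Rmult_assoc, Rinv_l by lra. nra. }
      lra. }
    assert (HQ : INR Q <= 2739 * rho ^ 2).
    { unfold Q, Dc. rewrite S_INR. pose proof (Nbox_bound (16 * rho) ltac:(lra)). nra. }
    rewrite plus_INR, mult_INR, S_INR. simpl (INR 1).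
    assert (0 <= INR T) by apply pos_INR.
    assert (0 <= INR Q) by apply pos_INR.
    assert ((INR T + 1) * INR Q <= (2 * ln k + 2) * (2739 * rho ^ 2)) by nra.
    nra.
  - intros i Hi. destruct (decP (I i)) eqn:E.
    + apply (proj1 (decP_true _)) in E. specialize (Hcol_lt i Hi E). lia.
    + lia.
  - intros v Hv.
    assert (Hnot : forall w, ~ I w -> (if decP (I w) then (sc w * Q + pal w)%nat else (S T * Q)%nat) = (S T * Q)%nat).
    { intros w Hw. destruct (decP (I w)) eqn:E; auto. apply (proj1 (decP_true _)) in E. contradiction. }
    assert (Hyes : forall w, I w -> (if decP (I w) then (sc w * Q + pal w)%nat else (S T * Q)%nat) = (sc w * Q + pal w)%nat).
    { intros w Hw. destruct (decP (I w)) eqn:E; auto. apply (proj2 (decP_true _)) in Hw. congruence. }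
    destruct (classic (I v)) as [HI|HnI].
    + exists v. split; auto. split; auto.
      intros w Hwn [->|Haw] Hne; [congruence|].
      assert (~ I w) by (intro; apply (HIind v w); auto).
      rewrite Hnot, Hyes by auto. specialize (Hcol_lt v Hv HI). lia.
    + destruct (HIdom v ltac:(apply in_seq; lia) HnI) as [u0 [HIu0 [Ha0 Hr0]]].
      destruct (min_exists (fun u => I u /\ adj F v u) sc) as [u [[HIu Hau] Hmin]].
      { exists u0; auto. }
      assert (Hun : (u < n)%nat) by auto.
      exists u. split; auto. split; auto.
      rewrite Hyes by auto.
      intros w Hwn [->|Haw] Hne.
      { rewrite Hnot by auto. specialize (Hcol_lt u Hun HIu). lia. }
      destruct (classic (I w)) as [HIw|HnIw].
      2:{ rewrite Hnot by auto. specialize (Hcol_lt u Hun HIu). lia. }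
      rewrite Hyes by auto. intro Ec.
      assert (Hs : sc w = sc u).
      { apply (digits _ (pal w) _ (pal u) Q); auto; unfold Q; pose proof (Hpal w); pose proof (Hpal u); lia. }
      assert (Hpe : pal w = pal u) by (rewrite Hs in Ec; lia).
      apply (Hpp u w Hun Hwn); auto.
      assert (Hu0n : (u0 < n)%nat) by auto.
      destruct (Hx u Hun) as [_ [_ [_ Ou]]]. destruct (Hx v Hv) as [_ [_ [_ Ov]]].
      destruct (Hx w Hwn) as [_ [_ [_ Ow]]].
      destruct (Hsc u Hun) as [_ [_ Ru]]. destruct (Hsc w Hwn) as [_ [_ Rw]].
      destruct (Hsc u0 Hu0n) as [_ [_ Ru0]].
      assert (Hm0 := Hmin u0 (conj HIu0 Ha0)).
      assert (Rv : r v <= L (sc u)) by (specialize (HLmono _ _ Hm0); lra).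
      rewrite Hs in Rw.
      destruct (adj_close rho F x r v u Ov Ou Hau) as [C1 C2].
      destruct (adj_close rho F x r v w Ov Ow Haw) as [C3 C4].
      assert (0 <= r v). { destruct (Hx v Hv). lra. }
      assert (0 <= r u). { destruct (Hx u Hun). lra. }
      assert (0 <= r w). { destruct (Hx w Hwn). lra. }
      split; [intro; subst; congruence|]. split; auto. split; auto. split; [auto|].
      rewrite Rabs_minus_sym in C1, C2.
      pose proof (Rabs_triang (fst (x u) - fst (x v)) (fst (x v) - fst (x w))).
      pose proof (Rabs_triang (snd (x u) - snd (x v)) (snd (x v) - snd (x w))).
      replace (fst (x u) - fst (x v) + (fst (x v) - fst (x w))) with (fst (x u) - fst (x w)) in H2 by ring.
      replace (snd (x u) - snd (x v) + (snd (x v) - snd (x w))) with (snd (x u) - snd (x w)) in H3 by ring.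
      split; nra.
Qed.

Theorem proposition1p7 :
  exists K : R, 0 < K /\
    forall (rho k : R) (n : nat) (F : nat -> pt -> Prop),
      1 <= rho -> 1 <= k ->
      (forall i j, (i < n)%nat -> (j < n)%nat -> i <> j -> F i <> F j) ->
      (forall i, (i < n)%nat -> fat rho (F i)) ->
      (forall i j s1 s2, (i < n)%nat -> (j < n)%nat ->
         is_size rho (F i) s1 -> is_size rho (F j) s2 -> s1 <= k * s2) ->
      chi_pn_le n F (K * k ^ 2 * rho ^ 2) /\
      (2 <= k -> chi_cn_le n F (K * rho ^ 2 * ln k)).
Proof.
  exists 1000000. split; [lra|].
  intros rho k n F Hrho Hk _ Hfat Hsz.
  destruct n as [|n].
  - split.
    + exists 0%nat, (fun _ => 0%nat). split; [simpl; nra|]. split; intros i Hi; lia.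
    + intro Hk2. exists 0%nat, (fun _ => 0%nat).
      assert (0 < ln k). { rewrite <- ln_1. apply ln_increasing; lra. }
      split; [simpl; nra|]. split; intros i Hi; lia.
  - destruct (setup rho k (S n) F Hrho Hk ltac:(lia) Hfat Hsz) as [x [r [m [Hm Hx]]]].
    split.
    + eapply pointed_part; eauto.
    + intro Hk2. eapply closed_part; eauto.
Qed.
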